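(* Let $S$ be a pomonoid and $B$ an $S$-poset. Every regular injective object $f:X\to B$ of $\mathbf{Pos}\text{-}S/B$ is a topological functor when $X$ and $B$ are regarded as categories (posets) and $f$ as a functor.
   Context: $\mathbf{Pos}\text{-}S$ is the category of right $S$-posets over a pomonoid $S$ with action-preserving monotone maps; $\mathbf{Pos}\text{-}S/B$ is its slice over $B$. Regular injective means injective with respect to order-embeddings (the regular monomorphisms). A poset is viewed as a category with a unique arrow $a\to a'$ iff $a\le a'$; monotone maps are functors. For a functor $G:\mathcal A\to\mathcal X$, a source $(f_i:A\to A_i)_{i\in I}$ in $\mathcal A$ is $G$-initial if for every source $(g_i:C\to A_i)_{i\in I}$ in $\mathcal A$ and every $\mathcal X$-morphism $h:GC\to GA$ with $Gg_i=Gf_i\circ h$ for all $i$, there is a unique $\bar h:C\to A$ with $G\bar h=h$ and $g_i=f_i\bar h$ for all $i$. A source $(f_i:A\to A_i)$ lifts a $G$-structured source $(x_i:X\to GA_i)$ if $GA=X$ and $Gf_i=x_i$ for all $i$. $G$ is topological if every $G$-structured source $(X\to GA_i)_{i\in I}$ has a unique $G$-initial lift. *)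

(* Defs.v *)
Set Implicit Arguments.
Unset Strict Implicit.

(** * Posets (viewed as thin categories: an arrow a -> a' is a proof of le a a') *)
Record Poset := {
  pcar :> Type;
  ple : pcar -> pcar -> Prop;
  ple_refl : forall a, ple a a;
  ple_trans : forall a b c, ple a b -> ple b c -> ple a c;
  ple_antisym : forall a b, ple a b -> ple b a -> a = b
}.
Arguments ple {p} _ _.
Arguments ple_trans {p a b c} _ _.

Definition pcomp {P : Poset} {a b c : P} (g : ple b c) (f : ple a b) : ple a c :=
  ple_trans f g.

Definition monotone {P Q : Poset} (G : P -> Q) : Prop :=
  forall a b : P, ple a b -> ple (G a) (G b).

(** * Initial sources and topological functors, for a functor between posets.
    A functor is a monotone map [G] together with its action on arrows [Gm]. *)
Section Topological.
Variables (P Q : Poset) (G : P -> Q) (Gm : monotone G).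

Definition G_initial (I : Type) (Ai : I -> P) (A : P) (f : forall i, ple A (Ai i)) : Prop :=
  forall (C : P) (g : forall i, ple C (Ai i)) (h : ple (G C) (G A)),
    (forall i, Gm (g i) = pcomp (Gm (f i)) h) ->
    exists! hb : ple C A, Gm hb = h /\ (forall i, g i = pcomp (f i) hb).

Definition G_lifts (I : Type) (Ai : I -> P) (X : Q) (x : forall i, ple X (G (Ai i)))
  (A : P) (f : forall i, ple A (Ai i)) : Prop :=
  exists e : G A = X,
    forall i, eq_rect (G A) (fun Y => ple Y (G (Ai i))) (Gm (f i)) X e = x i.

Definition topological : Prop :=
  forall (I : Type) (Ai : I -> P) (X : Q) (x : forall i, ple X (G (Ai i))),
    exists (A : P) (f : forall i, ple A (Ai i)),
      G_lifts x f /\ G_initial f /\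
      forall (A' : P) (f' : forall i, ple A' (Ai i)),
        G_lifts x f' -> G_initial f' ->
        existT (fun A0 => forall i, ple A0 (Ai i)) A' f'
        = existT (fun A0 => forall i, ple A0 (Ai i)) A f.
End Topological.
Arguments G_initial {P Q G} Gm {I Ai A} f.
Arguments G_lifts {P Q G} Gm {I Ai X} x {A} f.
Arguments topological {P Q G} Gm.

Record Pomonoid := {
  pm_pos :> Poset;
  pm_mul : pm_pos -> pm_pos -> pm_pos;
  pm_one : pm_pos;
  pm_assoc : forall a b c, pm_mul a (pm_mul b c) = pm_mul (pm_mul a b) c;
  pm_one_l : forall a, pm_mul pm_one a = a;
  pm_one_r : forall a, pm_mul a pm_one = a;
  pm_mul_mono : forall a a' b b', ple a a' -> ple b b' -> ple (pm_mul a b) (pm_mul a' b')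
}.

Record SPoset (S : Pomonoid) := {
  sp_pos :> Poset;
  sp_act : sp_pos -> S -> sp_pos;
  sp_act_one : forall x, sp_act x (pm_one S) = x;
  sp_act_mul : forall x s t, sp_act (sp_act x s) t = sp_act x (pm_mul s t);
  sp_act_mono : forall x x' (s s' : S), ple x x' -> ple s s' ->
                ple (sp_act x s) (sp_act x' s')
}.
Arguments sp_pos {S}.
Arguments sp_act {S s0} _ _.

Record SHom (S : Pomonoid) (A C : SPoset S) := {
  sh_fun :> A -> C;
  sh_mono : monotone sh_fun;
  sh_equiv : forall a s, sh_fun (sp_act a s) = sp_act (sh_fun a) s
}.
Arguments sh_fun {S A C}.
Arguments sh_mono {S A C}.

Record SliceObj (S : Pomonoid) (B : SPoset S) := {
  so_dom : SPoset S;
  so_map : SHom so_dom B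
}.
Arguments so_dom {S B}.
Arguments so_map {S B}.

Record SliceHom (S : Pomonoid) (B : SPoset S) (A C : SliceObj B) := {
  slh_map :> SHom (so_dom A) (so_dom C);
  slh_comm : forall a, so_map C (slh_map a) = so_map A a
}.
Arguments slh_map {S B A C}.

(** order-embeddings (the regular monomorphisms) *)
Definition order_embedding (P Q : Poset) (h : P -> Q) : Prop :=
  forall a a', ple (h a) (h a') <-> ple a a'.

Definition regular_injective (S : Pomonoid) (B : SPoset S) (X : SliceObj B) : Prop :=
  forall (A C : SliceObj B) (m : SliceHom A C),
    order_embedding (sh_fun (slh_map m)) ->
    forall g : SliceHom A X,
      exists h : SliceHom C X,
        forall a, sh_fun (slh_map h) (sh_fun (slh_map m) a) = sh_fun (slh_map g) a.

(* Main.v *)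
Require Import Defs.
From Stdlib Require Import ProofIrrelevance FunctionalExtensionality PropExtensionality ClassicalEpsilon.

Record PreSB (S : Pomonoid) (B : SPoset S) := {
  pT : Type;
  le0 : pT -> pT -> Prop;
  le0_refl : forall c, le0 c c;
  le0_trans : forall a b c, le0 a b -> le0 b c -> le0 a c;
  act0 : pT -> S -> pT;
  act0_one : forall c, act0 c (pm_one S) = c;
  act0_mul : forall c s t, act0 (act0 c s) t = act0 c (pm_mul s t);
  act0_mono : forall c d (s s' : S), le0 c d -> ple s s' -> le0 (act0 c s) (act0 d s');
  phi0 : pT -> B;
  phi0_mono : forall c d, le0 c d -> ple (phi0 c) (phi0 d);
  phi0_equiv : forall c s, phi0 (act0 c s) = sp_act (phi0 c) s
}.
Arguments pT {S B}.
Arguments le0 {S B R} _ _ : rename.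
Arguments act0 {S B R} _ _ : rename.
Arguments phi0 {S B R} _ : rename.

Definition cls {S B} (R : PreSB S B) (c : pT R) : pT R -> Prop :=
  fun d => le0 c d /\ le0 d c.
Definition QT {S B} (R : PreSB S B) := {P : pT R -> Prop | exists c, P = cls R c}.
Definition qin {S B} (R : PreSB S B) (c : pT R) : QT R :=
  exist _ (cls R c) (ex_intro _ c eq_refl).
Definition qrep {S B} (R : PreSB S B) (P : QT R) : pT R :=
  proj1_sig (constructive_indefinite_description _ (proj2_sig P)).

Lemma qrep_spec {S B} (R : PreSB S B) (P : QT R) : proj1_sig P = cls R (qrep R P).
Proof. unfold qrep. destruct (constructive_indefinite_description _ _). simpl. exact e. Qed.

Lemma QT_eq {S B} (R : PreSB S B) (P Q : QT R) : proj1_sig P = proj1_sig Q -> P = Q.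
Proof. destruct P, Q; simpl; intros; subst; f_equal; apply proof_irrelevance. Qed.

Lemma qin_eq {S B} (R : PreSB S B) c d : le0 c d -> le0 d c -> qin R c = qin R d.
Proof.
  intros H1 H2. apply QT_eq; simpl. unfold cls.
  apply functional_extensionality; intro x. apply propositional_extensionality.
  split; intros [Ha Hb]; split; eauto using le0_trans.
Qed.

Lemma qin_surj {S B} (R : PreSB S B) (P : QT R) : P = qin R (qrep R P).
Proof. apply QT_eq. simpl. apply qrep_spec. Qed.

Lemma rep_in {S B} (R : PreSB S B) c : le0 (qrep R (qin R c)) c /\ le0 c (qrep R (qin R c)).
Proof.
  pose proof (qrep_spec R (qin R c)) as H. simpl in H.
  assert (Hc : cls R c c) by (split; apply le0_refl).
  rewrite H in Hc. exact Hc.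
Qed.

Definition qle {S B} (R : PreSB S B) (P Q : QT R) : Prop := le0 (qrep R P) (qrep R Q).

Lemma qle_in {S B} (R : PreSB S B) c d : qle R (qin R c) (qin R d) <-> le0 c d.
Proof.
  unfold qle. destruct (rep_in R c), (rep_in R d).
  split; intro; eauto using le0_trans.
Qed.

Definition qact {S B} (R : PreSB S B) (P : QT R) (s : S) : QT R := qin R (act0 (qrep R P) s).

Lemma qact_in {S B} (R : PreSB S B) c s : qact R (qin R c) s = qin R (act0 c s).
Proof.
  unfold qact. destruct (rep_in R c).
  apply qin_eq; apply act0_mono; auto; apply ple_refl.
Qed.

Definition qphi {S B} (R : PreSB S B) (P : QT R) : B := phi0 (qrep R P).

Lemma qphi_in {S B} (R : PreSB S B) c : qphi R (qin R c) = phi0 c.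
Proof.
  unfold qphi. destruct (rep_in R c). apply ple_antisym; apply phi0_mono; auto.
Qed.

Definition QPoset {S B} (R : PreSB S B) : Poset.
Proof.
  refine (@Build_Poset (QT R) (qle R) _ _ _).
  - intro a. rewrite (qin_surj R a). apply qle_in. apply le0_refl.
  - intros a b c. rewrite (qin_surj R a), (qin_surj R b), (qin_surj R c).
    rewrite !qle_in. apply le0_trans.
  - intros a b. rewrite (qin_surj R a), (qin_surj R b). rewrite !qle_in.
    apply qin_eq.
Defined.

Definition QSP {S B} (R : PreSB S B) : SPoset S.
Proof.
  refine (@Build_SPoset S (QPoset R) (qact R) _ _ _).
  - intro x. rewrite (qin_surj R x). rewrite qact_in, act0_one. reflexivity.
  - intros x s t. rewrite (qin_surj R x). rewrite !qact_in, act0_mul. reflexivity.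
  - intros x x' s s'. simpl. rewrite (qin_surj R x), (qin_surj R x').
    rewrite !qact_in, !qle_in. intros; apply act0_mono; auto.
Defined.

Definition QHom {S B} (R : PreSB S B) : SHom (QSP R) B.
Proof.
  refine (@Build_SHom S (QSP R) B (qphi R) _ _).
  - intros a b. simpl. rewrite (qin_surj R a), (qin_surj R b), !qphi_in, qle_in.
    apply phi0_mono.
  - intros a s. simpl. rewrite (qin_surj R a), qact_in, !qphi_in. apply phi0_equiv.
Defined.

Definition QObj {S B} (R : PreSB S B) : SliceObj B := Build_SliceObj (QHom R).

Section Dummy. End Dummy.

Definition LL {S : Pomonoid} {B : SPoset S} (X : SliceObj B) (I : Type)
  (a : I -> so_dom X) (b : B) (c : so_dom X) : Prop :=
  (forall i, ple c (a i)) /\ ple (so_map X c) b.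

Arguments LL {S B} X {I} a b c.

Definition mle {S : Pomonoid} {B : SPoset S} (X : SliceObj B) (I : Type)
  (a : I -> so_dom X) (b : B) (u v : so_dom X + S) : Prop :=
  match u, v with
  | inl x, inl x' => ple x x'
  | inl x, inr s => exists c, LL X a b c /\ ple x (sp_act c s)
  | inr s, inl x => exists i s', ple s s' /\ ple (sp_act (a i) s') x
  | inr s, inr t => ple s t \/ exists i s' c, ple s s' /\ LL X a b c /\
                     ple (sp_act (a i) s') (sp_act c t)
  end.

Arguments mle {S B} X {I} a b u v.

Definition mact {S : Pomonoid} {B : SPoset S} (X : SliceObj B)
  (u : so_dom X + S) (s : S) : so_dom X + S :=
  match u with
  | inl x => inl (sp_act x s)
  | inr t => inr (pm_mul t s)
  end.

Definition mphi {S : Pomonoid} {B : SPoset S} (X : SliceObj B) (b : B)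
  (u : so_dom X + S) : B :=
  match u with
  | inl x => so_map X x
  | inr s => sp_act b s
  end.

Lemma act_le {S : Pomonoid} {A : SPoset S} (x y : A) (s : S) : ple x y -> ple (sp_act x s) (sp_act y s).
Proof. intro; apply sp_act_mono; auto; apply ple_refl. Qed.
Lemma act_le2 {S : Pomonoid} {A : SPoset S} (x : A) (s t : S) : ple s t -> ple (sp_act x s) (sp_act x t).
Proof. intro; apply sp_act_mono; auto; apply ple_refl. Qed.

Lemma mle_trans {S : Pomonoid} {B : SPoset S} (X : SliceObj B) (I : Type)
  (a : I -> so_dom X) (b : B) u v w :
  mle X a b u v -> mle X a b v w -> mle X a b u w.
Proof.
  destruct u as [x|s], v as [y|t], w as [z|r]; simpl; intros H1 H2.
  - eapply ple_trans; eauto.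
  - destruct H2 as [c [Hc H]]. exists c; split; auto. eapply ple_trans; eauto.
  - destruct H1 as [c [[Hc1 Hc2] H]]. destruct H2 as [i [s' [Hs H0]]].
    eapply ple_trans; [exact H|]. eapply ple_trans; [|exact H0].
    apply sp_act_mono; auto using ple_refl.
  - destruct H1 as [c [Hc H]]. destruct H2 as [H2|[i [s' [c' [Hs [[Hc'1 Hc'2] H2]]]]]].
    + exists c; split; auto. eapply ple_trans; [exact H|]. apply act_le2; auto.
    + exists c'; split; [split; auto|]. eapply ple_trans; [exact H|].
      eapply ple_trans; [|exact H2]. apply sp_act_mono; auto using ple_refl. apply (proj1 Hc).
  - destruct H1 as [i [s' [Hs H]]]. exists i, s'; split; auto. eapply ple_trans; eauto.
  - destruct H1 as [i [s' [Hs H]]]. destruct H2 as [c [Hc H2]].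
    right. exists i, s', c. repeat split; auto; try apply Hc. eapply ple_trans; eauto.
  - destruct H2 as [i [t' [Ht H2]]]. destruct H1 as [H1|[j [s' [c [Hs [[Hc1 Hc2] H1]]]]]].
    + exists i, t'; split; auto. eapply ple_trans; eauto.
    + exists j, s'; split; auto. eapply ple_trans; [exact H1|].
      eapply ple_trans; [|exact H2]. apply sp_act_mono; auto using ple_refl.
  - destruct H1 as [H1|[j [s' [c [Hs [[Hc1 Hc2] H1]]]]]];
    destruct H2 as [H2|[i [t' [c' [Ht [[Hc'1 Hc'2] H2]]]]]].
    + left; eapply ple_trans; eauto.
    + right. exists i, t', c'. repeat split; auto. eapply ple_trans; eauto.
    + right. exists j, s', c. repeat split; auto. eapply ple_trans; [exact H1|]. apply act_le2; auto.
    + right. exists j, s', c'. repeat split; auto. eapply ple_trans; [exact H1|].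
      eapply ple_trans; [|exact H2]. apply sp_act_mono; auto using ple_refl.
Qed.

Lemma mle_mono {S : Pomonoid} {B : SPoset S} (X : SliceObj B) (I : Type)
  (a : I -> so_dom X) (b : B) u v (s s' : S) :
  mle X a b u v -> ple s s' -> mle X a b (mact X u s) (mact X v s').
Proof.
  destruct u as [x|t], v as [y|r]; simpl; intros H Hs.
  - apply sp_act_mono; auto using ple_refl.
  - destruct H as [c [Hc H]]. exists c; split; auto. rewrite <- sp_act_mul. apply sp_act_mono; auto using ple_refl.
  - destruct H as [i [t' [Ht H]]]. exists i, (pm_mul t' s'). split.
    + apply pm_mul_mono; auto.
    + rewrite <- sp_act_mul. apply sp_act_mono; auto using ple_refl.
  - destruct H as [H|[i [t' [c [Ht [Hc H]]]]]].
    + left; apply pm_mul_mono; auto.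
    + right. exists i, (pm_mul t' s'), c. split; [|split; [exact Hc|]].
      * apply pm_mul_mono; auto.
      * rewrite <- !sp_act_mul. apply sp_act_mono; auto using ple_refl.
Qed.

Lemma mphi_mono {S : Pomonoid} {B : SPoset S} (X : SliceObj B) (I : Type)
  (a : I -> so_dom X) (b : B) (hb : forall i, ple b (so_map X (a i))) u v :
  mle X a b u v -> ple (mphi X b u) (mphi X b v).
Proof.
  destruct u as [x|t], v as [y|r]; simpl; intro H.
  - apply sh_mono; auto.
  - destruct H as [c [[Hc1 Hc2] H]]. eapply ple_trans; [apply (sh_mono (so_map X)); exact H|].
    rewrite sh_equiv. apply act_le; auto.
  - destruct H as [i [t' [Ht H]]]. eapply ple_trans; [|apply (sh_mono (so_map X)); exact H].
    rewrite sh_equiv. apply sp_act_mono; auto using ple_refl.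
  - destruct H as [H|[i [t' [c [Ht [[Hc1 Hc2] H]]]]]].
    + apply act_le2; auto.
    + eapply ple_trans; [|eapply ple_trans; [apply (sh_mono (so_map X)); exact H|]].
      * rewrite sh_equiv. apply sp_act_mono; auto using ple_refl.
      * rewrite sh_equiv. apply act_le; auto.
Qed.

Definition MyPre {S : Pomonoid} {B : SPoset S} (X : SliceObj B) (I : Type)
  (a : I -> so_dom X) (b : B) (hb : forall i, ple b (so_map X (a i))) : PreSB S B.
Proof.
  refine (@Build_PreSB S B (so_dom X + S) (mle X a b) _ _ (mact X) _ _ _ (mphi X b) _ _).
  - intros [x|s]; simpl. apply ple_refl. left; apply ple_refl.
  - apply mle_trans.
  - intros [x|s]; simpl. rewrite sp_act_one; auto. rewrite pm_one_r; auto.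
  - intros [x|u] s t; simpl. rewrite sp_act_mul; auto. rewrite pm_assoc; auto.
  - apply mle_mono.
  - apply mphi_mono; auto.
  - intros [x|u] s; simpl. apply sh_equiv. symmetry; apply sp_act_mul.
Defined.

Definition embH {S : Pomonoid} {B : SPoset S} (X : SliceObj B) (R : PreSB S B)
  (inj : so_dom X -> pT R)
  (inj_mono : forall y y', ple y y' -> le0 (inj y) (inj y'))
  (inj_act : forall y s, inj (sp_act y s) = act0 (inj y) s) : SHom (so_dom X) (QSP R).
Proof.
  refine (@Build_SHom S (so_dom X) (QSP R) (fun y => qin R (inj y)) _ _).
  - intros y y' Hy. simpl. apply qle_in. auto.
  - intros y s. simpl. rewrite qact_in, inj_act. reflexivity.
Defined.

Definition embS {S : Pomonoid} {B : SPoset S} (X : SliceObj B) (R : PreSB S B)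
  (inj : so_dom X -> pT R)
  (inj_mono : forall y y', ple y y' -> le0 (inj y) (inj y'))
  (inj_act : forall y s, inj (sp_act y s) = act0 (inj y) s)
  (inj_phi : forall y, phi0 (inj y) = so_map X y) : SliceHom X (QObj R).
Proof.
  refine (@Build_SliceHom S B X (QObj R) (embH X R inj inj_mono inj_act) _).
  intro y. simpl. rewrite qphi_in. apply inj_phi.
Defined.

Definition idS {S : Pomonoid} {B : SPoset S} (X : SliceObj B) : SliceHom X X.
Proof.
  unshelve refine (@Build_SliceHom S B X X (@Build_SHom S (so_dom X) (so_dom X) (fun y => y) _ _) _).
  all: try reflexivity.
  all: try (intros y y' H; exact H).
Defined.

Theorem mainTheorem7 (S : Pomonoid) (B : SPoset S) (X : SliceObj B) :
  regular_injective X ->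
  topological (sh_mono (so_map X)).
Proof.
  intros RI I Ai X0 x.
  set (R := MyPre X I Ai X0 x).
  assert (Hmono : forall y y', ple y y' -> @le0 S B R (inl y) (inl y')) by (intros; exact H).
  assert (Hact : forall y s, (inl (sp_act y s) : pT R) = @act0 S B R (inl y) s) by reflexivity.
  assert (Hphi : forall y, @phi0 S B R (inl y) = so_map X y) by reflexivity.
  set (m := embS X R (fun y => inl y) Hmono Hact Hphi).
  assert (Hemb : order_embedding (sh_fun (slh_map m))).
  { intros y y'. split; intro H.
    - exact (proj1 (qle_in R (inl y) (inl y')) H).
    - exact (proj2 (qle_in R (inl y) (inl y')) H). }
  destruct (RI X (QObj R) m Hemb (idS X)) as [h Hh].
  simpl in Hh.
  set (m0 := sh_fun (slh_map h) (qin R (inr (pm_one S)))).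
  assert (Hf : so_map X m0 = X0).
  { unfold m0. rewrite (slh_comm h). change (qphi R (qin R (inr (pm_one S))) = X0).
    rewrite qphi_in. simpl. apply sp_act_one. }
  assert (Hhm : forall q q', qle R q q' -> ple (sh_fun (slh_map h) q) (sh_fun (slh_map h) q')).
  { intros q q' Hq. apply (sh_mono (slh_map h)). exact Hq. }
  assert (Hle : forall i, ple m0 (Ai i)).
  { intro i. rewrite <- (Hh (Ai i)). apply Hhm. apply qle_in. simpl.
    exists i, (pm_one S). split. apply ple_refl. rewrite sp_act_one. apply ple_refl. }
  assert (Hmax : forall c, (forall i, ple c (Ai i)) -> ple (so_map X c) X0 -> ple c m0).
  { intros c H1 H2. rewrite <- (Hh c). apply Hhm. apply qle_in. simpl.
    exists c. split. split; auto. rewrite sp_act_one. apply ple_refl. }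
  exists m0, Hle. split; [|split].
  - exists Hf. intro i. apply proof_irrelevance.
  - intros C g h' _.
    assert (h'' : ple (so_map X C) X0) by (rewrite <- Hf; exact h').
    exists (Hmax C g h''). split.
    + split; [apply proof_irrelevance | intro; apply proof_irrelevance].
    + intros; apply proof_irrelevance.
  - intros A' f' [e _] Hinit.
    assert (h1 : ple (so_map X m0) (so_map X A')) by (rewrite Hf, e; apply ple_refl).
    destruct (Hinit m0 Hle h1) as [hb _].
    { intro; apply proof_irrelevance. }
    assert (h2 : ple A' m0) by (apply Hmax; [exact f' | rewrite e; apply ple_refl]).
    assert (HA : A' = m0) by (apply ple_antisym; [exact h2 | exact hb]).
    subst A'. f_equal. apply functional_extensionality_dep. intro; apply proof_irrelevance.
Qed.
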